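(* Let $G=(V,E)$ be a finite connected graph all of whose vertices have even degree, and let $v_0\in V$. Let $C$ be the expected vertex cover time of simple random walk on $G$ started at $v_0$. Then for every rule $\mathcal{R}$, the greedy random walk on $G$ with rule $\mathcal{R}$ started at $v_0$ satisfies \[ \mathbb{E}[C_E(G)]\le |E|+C. \]
   Context: A greedy random walk (GRW) on a connected locally finite graph $G=(V,E)$ with rule $\mathcal{R}$ started at $v_0$: $X_0=v_0$; with $H_t=\{\{X_{s-1},X_s\}:0<s\le t\}$ and $J_t(v)=\{e\in E: v\in e, e\notin H_t\}$, if $J_t(X_t)\ne\emptyset$ then $X_{t+1}=w$ for some $w$ with $\{X_t,w\}\in J_t(X_t)$, chosen according to an arbitrary (possibly randomized, history-dependent) rule $\mathcal{R}$; if $J_t(X_t)=\emptyset$ then $X_{t+1}$ is a uniformly random neighbor of $X_t$. $C_E(G)=\min\{t:H_t=E\}$ is the edge cover time. The vertex cover time of simple random walk is the first time at which every vertex has been visited. *)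

(* Defs.v *)
From Stdlib Require Export Reals.
From mathcomp Require Export all_boot.
Set Implicit Arguments. Unset Strict Implicit. Unset Printing Implicit Defensive.

Definition sumR {A : Type} (f : A -> R) (s : seq A) : R :=
  foldr (fun x acc => Rplus (f x) acc) R0 s.

Section GRW.
Variable T : finType.
Variable e : rel T.   (* simple graph: symmetric irreflexive adjacency *)

Definition deg (v : T) : nat := #|[pred w | e v w]|.

Definition numEdges : R := Rdiv (INR #|[pred p : T * T | e p.1 p.2]|) 2.

(* the undirected edge {u,w} is among the traversed edges of the
   vertex sequence p = X_0 ... X_t, i.e. {u,w} \in H_t *)
Definition traversed (p : seq T) (u w : T) : bool :=
  has (fun xy => (xy == (u, w)) || (xy == (w, u))) (zip p (behead p)).

Definition unused (p : seq T) (v w : T) : bool := e v w && ~~ traversed p v w.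

(* A rule: given the full history X_0..X_t (a nonempty sequence), a
   probability distribution on the next vertex; it must be a probability
   distribution supported on J_t(X_t) whenever J_t(X_t) is nonempty. *)
Definition valid_rule (rule : seq T -> T -> R) : Prop :=
  forall (x : T) (s : seq T),
    let h := x :: s in let v := last x s in
    has (unused h v) (enum T) ->
      (forall w, Rle R0 (rule h w)) /\
      (forall w, rule h w <> R0 -> unused h v w) /\
      sumR (rule h) (enum T) = R1.

(* transition probability of the greedy random walk, history h (nonempty,
   x0 only used as a default for last) *)
Definition grw_step (rule : seq T -> T -> R) (x0 : T) (h : seq T) (w : T) : R :=
  let v := last x0 h in
  if has (unused h v) (enum T) then rule h w
  else if e v w then Rinv (INR (deg v)) else R0.

Definition srw_step (x0 : T) (h : seq T) (w : T) : R :=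
  let v := last x0 h in if e v w then Rinv (INR (deg v)) else R0.

(* probability that the walk with kernel step, having history h,
   next visits xs in order *)
Fixpoint pathprob (step : seq T -> T -> R) (h : seq T) (xs : seq T) : R :=
  match xs with
  | [::] => R1
  | x :: xs' => Rmult (step h x) (pathprob step (rcons h x) xs')
  end.

Fixpoint allseqs (n : nat) : seq (seq T) :=
  match n with
  | 0 => [:: [::]]
  | n'.+1 => [seq x :: s | x <- enum T, s <- allseqs n']
  end.

Definition edge_covered (p : seq T) : bool :=
  [forall u, forall w, e u w ==> traversed p u w].

Definition vertex_covered (p : seq T) : bool := [forall u, u \in p].

(* P(cover time > t), where cover = first time the covered predicate holds *)
Definition tail_prob (step : seq T -> T -> R) (v0 : T)
    (cov : seq T -> bool) (t : nat) : R :=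
  sumR (fun xs => if cov (v0 :: xs) then R0 else pathprob step [:: v0] xs)
       (allseqs t).

(* partial sums sum_{t<n} P(cover time > t); their supremum is the
   expected cover time (in [0, +oo]) *)
Definition partial_exp (step : seq T -> T -> R) (v0 : T)
    (cov : seq T -> bool) (n : nat) : R :=
  sumR (tail_prob step v0 cov) (iota 0 n).

End GRW.

(* Main.v *)
Require Import Defs.
From Stdlib Require Import Lra.
Open Scope R_scope.

Lemma sumR_ext {A} (f g : A -> R) s : (forall x, f x = g x) -> sumR f s = sumR g s.
Proof. move=> H; elim: s => //= x s ->; by rewrite H. Qed.

Lemma sumR_le {A} (f g : A -> R) s : (forall x, f x <= g x) -> sumR f s <= sumR g s.
Proof. move=> H; elim: s => /= [|x s IH]; first lra. have := H x; lra. Qed.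

Lemma sumR_scal {A} (f : A -> R) a s : sumR (fun x => a * f x) s = a * sumR f s.
Proof. elim: s => /= [|x s ->]; lra. Qed.

Lemma sumR_scalr {A} (f : A -> R) a s : sumR (fun x => f x * a) s = sumR f s * a.
Proof. elim: s => /= [|x s ->]; lra. Qed.

Lemma sumR_cat {A} (f : A -> R) s1 s2 : sumR f (s1 ++ s2) = sumR f s1 + sumR f s2.
Proof. elim: s1 => /= [|x s ->]; lra. Qed.

Lemma sumR_map {A B} (f : B -> R) (g : A -> B) s : sumR f (map g s) = sumR (fun x => f (g x)) s.
Proof. by elim: s => //= x s ->. Qed.

Lemma sumR_flatten {A} (f : A -> R) ss : sumR f (flatten ss) = sumR (sumR f) ss.
Proof. elim: ss => //= s ss <-; by rewrite sumR_cat. Qed.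

Lemma sumR_swap {A B} (F : A -> B -> R) s t :
  sumR (fun x => sumR (F x) t) s = sumR (fun y => sumR (fun x => F x y) s) t.
Proof.
elim: s => /= [|x s ->]; first by elim: t => //= y t <-; lra.
elim: t => /= [|y t IH]; first lra. rewrite -IH; lra.
Qed.

Lemma sumR_nonneg {A} (f : A -> R) s : (forall x, 0 <= f x) -> 0 <= sumR f s.
Proof. move=> H; elim: s => /= [|x s IH]; first lra. have := H x; lra. Qed.

Lemma sumR_if_count {A} (P : pred A) a s :
  sumR (fun x => if P x then a else 0) s = INR (count P s) * a.
Proof. elim: s => /= [|x s ->]; first lra. case: (P x); [rewrite add1n S_INR|rewrite add0n]; lra. Qed.

Section V.
Variable T : finType.

Definition Gf (step : seq T -> T -> R) (cov : seq T -> bool) h t :=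
  sumR (fun xs => if cov (h ++ xs) then 0 else pathprob step h xs) (allseqs T t).

Fixpoint Vf (step : seq T -> T -> R) (cov : seq T -> bool) h n : R :=
  match n with
  | 0 => 0
  | n'.+1 => (if cov h then 0 else 1) + sumR (fun x => step h x * Vf step cov (rcons h x) n') (enum T)
  end.

Lemma Gf0 step cov h : Gf step cov h 0 = if cov h then 0 else 1.
Proof. rewrite /Gf /= cats0; case: (cov h); lra. Qed.

Lemma GfS step cov h t :
  Gf step cov h t.+1 = sumR (fun x => step h x * Gf step cov (rcons h x) t) (enum T).
Proof.
rewrite /Gf /= sumR_flatten sumR_map; apply: sumR_ext => x.
rewrite sumR_map -sumR_scal; apply: sumR_ext => s /=.
rewrite -cat_rcons; case: (cov _); lra.
Qed.

Lemma Vf_eq step cov h n : Vf step cov h n = sumR (Gf step cov h) (iota 0 n).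
Proof.
elim: n h => [|n IH] h //=.
rewrite Gf0; congr (_ + _).
rewrite -(addn0 1%N) iotaDl sumR_map.
rewrite (sumR_ext (fun t => Gf step cov h (1 + t)%N)
   (fun t => sumR (fun x => step h x * Gf step cov (rcons h x) t) (enum T))); last first.
  by move=> t; rewrite add1n GfS.
rewrite sumR_swap; apply: sumR_ext => x; by rewrite sumR_scal IH.
Qed.

Lemma partial_exp_Vf step v0 cov n : partial_exp step v0 cov n = Vf step cov [:: v0] n.
Proof. by rewrite Vf_eq. Qed.

End V.
Arguments Vf {T}. Arguments Gf {T}.
Set Implicit Arguments. Unset Strict Implicit.

Section G.
Variable T : finType.
Variable e : rel T.
Hypothesis esymm : symmetric e.
Hypothesis eirr : irreflexive e.
Variable v0 : T.

Lemma zip_rcons_last (x : T) s w :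
  zip (x :: rcons s w) (rcons s w) = rcons (zip (x :: s) s) (last x s, w).
Proof. by elim: s x => //= y s IH x; rewrite IH. Qed.

Lemma traversed_rcons (h : seq T) w a b : h != [::] ->
  traversed (rcons h w) a b =
  traversed h a b || (((a == last v0 h) && (b == w)) || ((a == w) && (b == last v0 h))).
Proof.
case: h => // x s _.
rewrite /traversed /= zip_rcons_last -cats1 has_cat /= orbF !xpair_eqE.
congr (_ || _); rewrite (eq_sym (last x s) a) (eq_sym w b) (eq_sym (last x s) b) (eq_sym w a).
by rewrite [(b == _) && _]andbC.
Qed.

Lemma traversedC (h : seq T) a b : traversed h a b = traversed h b a.
Proof. by rewrite /traversed; apply: eq_has => xy; rewrite orbC. Qed.

Lemma unusedC (h : seq T) a b : unused e h a b = unused e h b a.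
Proof. by rewrite /unused esymm traversedC. Qed.

Definition uc (h : seq T) x := #|[pred y | unused e h x y]|.
Definition Kc (h : seq T) := #|[pred p : T * T | unused e h p.1 p.2]|.

Definition Inv (h g : seq T) :=
  [/\ h != [::], g != [::],
   (forall x, x \in g -> x != last v0 g -> forall y, e x y -> traversed h x y) &
   (forall x, odd (uc h x) = (last v0 h != last v0 g) && ((x == last v0 h) || (x == last v0 g)))].

Lemma card_rm (A : finType) (P : pred A) a : P a ->
  #|[pred y | P y]| = (#|[pred y | P y && (y != a)]|).+1.
Proof. by move=> Pa; rewrite (cardD1x Pa) add1n. Qed.

Lemma greedy_step (h g : seq T) w : Inv h g -> unused e h (last v0 h) w ->
  Inv (rcons h w) g /\ Kc h = (Kc (rcons h w)).+2.
Proof.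
case=> hn gn I1 I2 uw.
set v := last v0 h in uw *.
have evw : e v w by case/andP: uw.
have vw : v != w by apply: contraTneq evw => ->; rewrite eirr.
have U : forall a b, unused e (rcons h w) a b =
   unused e h a b && ~~ (((a == v) && (b == w)) || ((a == w) && (b == v))).
  by move=> a b; rewrite /unused traversed_rcons // negb_or andbA.
split; last first.
  rewrite /Kc (@card_rm _ (fun p : T * T => unused e h p.1 p.2) (v, w)) //.
  rewrite (@card_rm _ (fun y : T * T => unused e h y.1 y.2 && (y != (v, w))) (w, v)) /=; last first.
    apply/andP; split; first by rewrite unusedC.
    by rewrite xpair_eqE eq_sym (negbTE vw).
  congr _.+2; apply: eq_card => [[a b]]; rewrite !inE /= U !xpair_eqE negb_or -!andbA.
  by [].
split=> //.
- by rewrite -size_eq0 size_rcons.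
- by move=> x xg xl y exy; rewrite traversed_rcons // (I1 x xg xl y exy).
move=> x; rewrite last_rcons.
have Hv : uc h v = (uc (rcons h w) v).+1.
  rewrite /uc (@card_rm _ (fun y => unused e h v y) w uw); congr _.+1; apply: eq_card => y; rewrite !inE U eqxx /=.
  by rewrite (negbTE vw) /= orbF.
have Hw : uc h w = (uc (rcons h w) w).+1.
  have uw' : unused e h w v by rewrite unusedC.
  rewrite /uc (@card_rm _ (fun y => unused e h w y) v uw'); congr _.+1; apply: eq_card => y; rewrite !inE U eqxx /=.
  by rewrite [w == v]eq_sym (negbTE vw).
have Ho : x != v -> x != w -> uc (rcons h w) x = uc h x.
  move=> xv xw; rewrite /uc; apply: eq_card => y; rewrite !inE U (negbTE xv) (negbTE xw) /=.
  by rewrite andbT.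
have := I2 x; rewrite -/v.
set u := last v0 g.
case: (eqVneq x v) => [->|xv].
  rewrite Hv /=; case: (eqVneq v u) => [<-|vu] /= H.
    by rewrite -[odd _]negbK H eq_sym vw orbT.
  by rewrite -[odd _]negbK H (negbTE vw) andbF.
case: (eqVneq x w) => [->|xw].
  rewrite Hw /=; case: (eqVneq v u) => [<-|vu] /= H.
    by rewrite -[odd _]negbK H eq_sym vw.
  by rewrite -[odd _]negbK H andbT.
rewrite Ho // /=.
case: (eqVneq x u) => [<-|xu]; last by rewrite !andbF.
by rewrite !andbT => ->; rewrite eq_sym xv eq_sym xw.
Qed.

Lemma stuck_basic (h g : seq T) : Inv h g -> ~~ has (unused e h (last v0 h)) (enum T) ->
  last v0 h = last v0 g /\ (vertex_covered g -> edge_covered e h).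
Proof.
case=> hn gn I1 I2 st.
set v := last v0 h in st I2 *.
have stv : forall y, e v y -> traversed h v y.
  move=> y evy; move/hasPn: st => /(_ y (mem_enum _ y)).
  by rewrite /unused evy /= negbK.
have lv : v = last v0 g.
  have H0 : uc h v = 0%N.
    rewrite /uc; apply: eq_card0 => y; rewrite !inE /unused.
    by case evy: (e v y) => //=; rewrite stv.
  by move: (I2 v); rewrite H0 /= eqxx orTb andbT => /esym/negbFE/eqP.
split; first exact: lv.
move=> /forallP cv; apply/forallP => a; apply/forallP => b; apply/implyP => eab.
case: (eqVneq a (last v0 g)) => [al|al]; last exact: I1 _ (cv a) al b eab.
by rewrite al -lv; apply: stv; rewrite lv -al.
Qed.

Lemma stuck_step (h g : seq T) w : Inv h g -> ~~ has (unused e h (last v0 h)) (enum T) ->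
  e (last v0 h) w ->
  [/\ last v0 h = last v0 g, Inv (rcons h w) (rcons g w), Kc (rcons h w) = Kc h &
      (vertex_covered g -> edge_covered e h)].
Proof.
case=> hn gn I1 I2 st ew.
set v := last v0 h in st ew I2 *.
have stv : forall y, e v y -> traversed h v y.
  move=> y evy; move/hasPn: st => /(_ y (mem_enum _ y)).
  by rewrite /unused evy /= negbK.
have lv : v = last v0 g.
  have H0 : uc h v = 0%N.
    rewrite /uc; apply: eq_card0 => y; rewrite !inE /unused.
    by case evy: (e v y) => //=; rewrite stv.
  by move: (I2 v); rewrite H0 /= eqxx orTb andbT => /esym/negbFE/eqP.
have T' : forall a b, traversed (rcons h w) a b = traversed h a b.
  move=> a b; rewrite traversed_rcons // -/v.
  case Ht: (traversed h a b) => //=.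
  apply/negbTE/negP => /orP [] /andP [/eqP Ea /eqP Eb]; move: Ht; rewrite Ea Eb.
    by rewrite stv.
  by rewrite traversedC stv.
have U' : forall a b, unused e (rcons h w) a b = unused e h a b.
  by move=> a b; rewrite /unused T'.
split.
- exact: lv.
- split.
  + by rewrite -size_eq0 size_rcons.
  + by rewrite -size_eq0 size_rcons.
  + move=> x; rewrite mem_rcons inE last_rcons => /orP [/eqP->|xg]; first by rewrite eqxx.
    move=> xw y exy; rewrite T'.
    case: (eqVneq x (last v0 g)) => [xl|xl]; last exact: I1.
    by rewrite xl -lv; apply: stv; rewrite lv -xl.
  + move=> x; rewrite !last_rcons eqxx /=.
    have -> : uc (rcons h w) x = uc h x by apply: eq_card => y; rewrite !inE U'.
    by rewrite I2 lv eqxx.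
- by apply: eq_card => p; rewrite !inE U'.
- move=> /forallP cv; apply/forallP => a; apply/forallP => b; apply/implyP => eab.
  case: (eqVneq a (last v0 g)) => [al|al]; last exact: I1 _ (cv a) al b eab.
  by rewrite al -lv; apply: stv; rewrite lv -al.
Qed.

Lemma traversed1 a b : traversed [:: v0] a b = false.
Proof. by []. Qed.

Lemma Inv_init : (forall v : T, ~~ odd (deg e v)) -> Inv [:: v0] [:: v0].
Proof.
move=> ev; split=> //.
- by move=> x; rewrite inE /= => /eqP ->; rewrite eqxx.
- move=> x /=; rewrite eqxx /=.
  have -> : uc [:: v0] x = deg e x.
    by apply: eq_card => y; rewrite !inE /unused /= andbT.
  exact: negbTE (ev x).
Qed.

Lemma Kc_init : INR (Kc [:: v0]) / 2 = numEdges e.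
Proof.
rewrite /numEdges; congr (INR _ / 2).
by apply: eq_card => p; rewrite !inE /unused /= andbT.
Qed.

End G.

Lemma sumR_plus {A} (f g : A -> R) s : sumR (fun x => f x + g x) s = sumR f s + sumR g s.
Proof. elim: s => /= [|x s ->]; lra. Qed.

Lemma VfS (T : finType) step cov (h : seq T) n :
  Vf step cov h n.+1 = (if cov h then 0 else 1) + sumR (fun x => step h x * Vf step cov (rcons h x) n) (enum T).
Proof. by []. Qed.

Lemma Vf_nonneg (T : finType) step cov (h : seq T) n :
  (forall h x, 0 <= step h x) -> 0 <= Vf step cov h n.
Proof.
move=> Hs; elim: n h => [|n IH] h /=; first lra.
have : 0 <= sumR (fun x => step h x * Vf step cov (rcons h x) n) (enum T).
  by apply: sumR_nonneg => x; apply: Rmult_le_pos.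
move=> HH; rewrite !enumT in HH *; case: (cov h); lra.
Qed.

Lemma Vf_mono (T : finType) step cov (h : seq T) n :
  (forall h x, 0 <= step h x) -> Vf step cov h n <= Vf step cov h n.+1.
Proof.
move=> Hs; elim: n h => [|n IH] h.
  rewrite VfS /=.
  have : 0 <= sumR (fun x => step h x * 0) (enum T).
    by apply: sumR_nonneg => x; rewrite Rmult_0_r; lra.
  move=> HH; rewrite !enumT in HH *; case: (cov h); lra.
rewrite VfS [Vf _ _ _ n.+2]VfS.
apply: Rplus_le_compat_l; apply: sumR_le => x.
by apply: Rmult_le_compat_l; [apply: Hs | apply: IH].
Qed.

Lemma Rinv_INR_nonneg n : 0 <= / INR n.
Proof.
case: n => [|n]; first by rewrite /= Rinv_0; lra.
by apply: Rlt_le; apply: Rinv_0_lt_compat; apply: lt_0_INR; apply/ltP.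
Qed.

Lemma srw_nonneg (T : finType) (e : rel T) v0 h x : 0 <= srw_step e v0 h x.
Proof. rewrite /srw_step; case: (e _ x); [apply: Rinv_INR_nonneg | lra]. Qed.

Lemma deg_count (T : finType) (e : rel T) v : deg e v = count (e v) (enum T).
Proof. rewrite /deg enumT cardE /enum_mem size_filter. by apply: eq_count => y; rewrite !inE. Qed.

Lemma sum_p_le1 (T : finType) (e : rel T) v :
  sumR (fun x => if e v x then / INR (deg e v) else 0) (enum T) <= 1.
Proof.
rewrite sumR_if_count -deg_count.
case: (deg e v) => [|d]; first by rewrite /= Rmult_0_l; lra.
rewrite Rinv_r; first lra.
by apply: not_0_INR.
Qed.

Lemma grw_greedy (T : finType) (e : rel T) rule v0 (h : seq T) x :
  has (unused e h (last v0 h)) (enum T) -> grw_step e rule v0 h x = rule h x.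
Proof. by rewrite /grw_step => ->. Qed.

Lemma grw_stuck (T : finType) (e : rel T) rule v0 (h : seq T) x :
  has (unused e h (last v0 h)) (enum T) = false ->
  grw_step e rule v0 h x = if e (last v0 h) x then / INR (deg e (last v0 h)) else 0.
Proof. by rewrite /grw_step => ->. Qed.

Lemma main_ineq (T : finType) (e : rel T) (esymm : symmetric e) (eirr : irreflexive e)
  (v0 : T) (rule : seq T -> T -> R) (hrule : valid_rule e rule) n :
  forall h g, Inv e v0 h g ->
  Vf (grw_step e rule v0) (edge_covered e) h n <=
    INR (Kc e h) / 2 + Vf (srw_step e v0) (@vertex_covered T) g n.
Proof.
have Sn : forall h x, 0 <= srw_step e v0 h x by move=> *; apply: srw_nonneg.
elim: n => [|n IH] h g Hinv.
  by rewrite /=; have := pos_INR (Kc e h); lra.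
have K0 := pos_INR (Kc e h).
rewrite VfS.
case b: (has (unused e h (last v0 h)) (enum T)).
- have hn : h != [::] by case: Hinv.
  have [Rpos [Rsupp Rsum]] : (forall w, 0 <= rule h w) /\
      (forall w, rule h w <> 0 -> unused e h (last v0 h) w) /\ sumR (rule h) (enum T) = 1.
    have [x0 [s Hh]] : exists x0 s, h = x0 :: s by case: (h) hn => // x0 s _; exists x0, s.
    have Hl : last v0 h = last x0 s by rewrite Hh.
    move: (hrule x0 s) => /=; rewrite -Hh -Hl => H; exact: H.
  have Hsum : sumR (fun x => grw_step e rule v0 h x * Vf (grw_step e rule v0) (edge_covered e) (rcons h x) n) (enum T)
      <= sumR (fun x => rule h x * (INR (Kc e h) / 2 - 1 + Vf (srw_step e v0) (@vertex_covered T) g n)) (enum T).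
    apply: sumR_le => x; rewrite grw_greedy //.
    case: (Req_dec (rule h x) 0) => [->|nz]; first by rewrite !Rmult_0_l; lra.
    have [Inv' Kq] := greedy_step esymm eirr Hinv (Rsupp x nz).
    apply: Rmult_le_compat_l; first exact: Rpos.
    have := IH _ _ Inv'; rewrite Kq !S_INR; lra.
  rewrite sumR_scalr Rsum in Hsum.
  have := @Vf_mono T (srw_step e v0) (@vertex_covered T) g n Sn.
  move=> HH; rewrite !enumT in HH Hsum *; case: (edge_covered e h); lra.
- have [lv cv] := stuck_basic Hinv (negbT b).
  rewrite VfS.
  set v := last v0 h in lv b.
  set K := INR (Kc e h) / 2.
  have Hsum : sumR (fun x => grw_step e rule v0 h x * Vf (grw_step e rule v0) (edge_covered e) (rcons h x) n) (enum T)
      <= sumR (fun x => (if e v x then / INR (deg e v) else 0) * K +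
                        srw_step e v0 g x * Vf (srw_step e v0) (@vertex_covered T) (rcons g x) n) (enum T).
    apply: sumR_le => x; rewrite grw_stuck // -/v.
    rewrite (_ : srw_step e v0 g x = if e v x then / INR (deg e v) else 0); last by rewrite /srw_step lv.
    case evx: (e v x); last by rewrite !Rmult_0_l; lra.
    have [_ Inv' Kq _] := stuck_step Hinv (negbT b) evx.
    rewrite -Rmult_plus_distr_l; apply: Rmult_le_compat_l; first exact: Rinv_INR_nonneg.
    by have := IH _ _ Inv'; rewrite Kq.
  rewrite sumR_plus sumR_scalr in Hsum.
  have Hp := sum_p_le1 e v.
  have Hp0 : 0 <= sumR (fun x => if e v x then / INR (deg e v) else 0) (enum T).
    by apply: sumR_nonneg => x; case: (e v x); [apply: Rinv_INR_nonneg | lra].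
  have HK : sumR (fun x => if e v x then / INR (deg e v) else 0) (enum T) * K <= K.
    have K0' : 0 <= K by rewrite /K; lra.
    by rewrite -{2}(Rmult_1_l K); apply: Rmult_le_compat_r.
  case vc: (vertex_covered g).
    by rewrite (cv vc); lra.
  case: (edge_covered e h); lra.
Qed.

Theorem mainTheorem8 (T : finType) (e : rel T)
  (esym : symmetric e) (eirr : irreflexive e)
  (econn : forall u v : T, connect e u v)
  (eeven : forall v : T, ~~ odd (deg e v))
  (v0 : T) (rule : seq T -> T -> R) (hrule : valid_rule e rule) :
  forall n : nat, exists m : nat,
    Rle (partial_exp (grw_step e rule v0) v0 (edge_covered e) n)
        (Rplus (numEdges e) (partial_exp (srw_step e v0) v0 (@vertex_covered T) m)).
Proof.
move=> n; exists n.
rewrite !partial_exp_Vf -(Kc_init e v0).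
apply: (@main_ineq T e esym eirr v0 rule hrule n); exact: Inv_init.
Qed.
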